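(* For all non-negative integers $\beta$ and $k$, let $$X := \{(\alpha, l) \in \mathbb{Z}^2 : 0 \leq \alpha \leq \beta,\ 0 \leq l \leq k,\ (\alpha,l) \neq (\beta, k),\ (q-1) \mid (\beta + k -(\alpha + l)) \}.$$ Then $z(\chi_t^0, x, 0) = 1$, and $$z(\chi_t^\beta,x,-k) = 1 - x^{-1} \sum_{(\alpha,l) \in X}{\beta \choose \alpha}{k \choose l}t^\alpha \theta^l\, z(\chi_t^\alpha, x, -l).$$
   Context: Let $q$ be a power of a prime $p$, $A=\mathbb{F}_q[\theta]$ with $\theta$ an indeterminate, and for $d\ge 0$ let $A_+(d)$ be the set of monic polynomials in $A$ of degree $d$. Let $t$ be an indeterminate and $\chi_t:A\to\mathbb{F}_q[t]$ the $\mathbb{F}_q$-algebra morphism sending $\theta$ to $t$ (so $\chi_t(a)=a(t)$); $\chi_t(a)^0:=1$. For non-negative integers $\beta,k,d$ put $S_d(\chi_t^\beta,k):=\sum_{a\in A_+(d)}\chi_t(a)^\beta a^k\in A[t]$, and define the special series $z(\chi_t^\beta,x,-k):=\sum_{d\ge 0}x^{-d}S_d(\chi_t^\beta,k)\in A[t][[x^{-1}]]$. *)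

(* Defs.v *)
From HB Require Import structures.
From mathcomp Require Import all_boot all_order all_algebra all_field.
Set Implicit Arguments. Unset Strict Implicit. Unset Printing Implicit Defensive.
Import Order.TTheory GRing.Theory.
Local Open Scope ring_scope.

Section Defs.
Variable F : finFieldType.

(* A = F[theta] is {poly F}; A[t] is {poly {poly F}} with outer variable t = 'X
   and theta embedded as the constant polynomial ('X)%:P. *)
Definition Apoly := {poly F}.
Definition At := {poly {poly F}}.

Definition thetaAt : At := ('X : {poly F})%:P.
Definition tAt : At := 'X.

Definition monic_of (d : nat) (c : {ffun 'I_d -> F}) : {poly F} :=
  'X^d + \poly_(i < d) (if insub i is Some j then c j else 0).

Definition Aplus (d : nat) : seq {poly F} :=
  [seq monic_of c | c <- enum {ffun 'I_d -> F}].

Definition chi_t (a : {poly F}) : At := map_poly (fun c : F => c%:P) a.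

Definition S (d beta k : nat) : At :=
  \sum_(a <- Aplus d) chi_t a ^+ beta * (a%:P) ^+ k.

(* formal series in x^{-1} over A[t], represented by coefficient sequences:
   f represents sum_d f d * x^{-d} *)
Definition z (beta k : nat) : nat -> At := fun d => S d beta k.

Definition ps_one : nat -> At := fun d => (d == 0%N)%:R.
Definition ps_xinv (f : nat -> At) : nat -> At :=
  fun d => if d is d'.+1 then f d' else 0.
Definition ps_sub (f g : nat -> At) : nat -> At := fun d => f d - g d.

Definition Xsum (beta k : nat) : nat -> At := fun d =>
  \sum_(alpha < beta.+1) \sum_(l < k.+1 |
      ((alpha : nat, l : nat) != (beta, k)) &&
      ((#|F| - 1)%N %| (beta + k - (alpha + l)))%N)
    ('C(beta, alpha) * 'C(k, l))%:R * tAt ^+ alpha * thetaAt ^+ l * z alpha l d.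

End Defs.

(* Main.v *)
Require Import Defs.
From HB Require Import structures.
From mathcomp Require Import all_boot all_order all_algebra all_field.
From mathcomp Require Import ring zify.
Set Implicit Arguments. Unset Strict Implicit. Unset Printing Implicit Defensive.
Import Order.TTheory GRing.Theory.
Local Open Scope ring_scope.

Section Fin.
Variable F : finFieldType.

Lemma cardF0 : (#|F|%:R : F) = 0.
Proof.
have [p pr chp] := finPcharP F.
have := card_pprimeChar chp => /= ->.
rewrite natrX (pcharf0 chp) expr0n.
case: eqP => // H.
have := finNzRing_gt1 F.
by have := card_pprimeChar chp => /= ->; rewrite H.
Qed.

Lemma cardF_gt1 : (1 < #|F|)%N.
Proof. exact: finNzRing_gt1. Qed.

Lemma cardF1N : ((#|F|.-1)%:R : F) = -1.
Proof.
apply/eqP; rewrite -subr_eq0 opprK natr1 prednK ?cardF0 //.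
by apply: ltn_trans (cardF_gt1).
Qed.

Lemma xq1 (x : F) : x != 0 -> x ^+ #|F|.-1 = 1.
Proof.
move=> x0; apply: (mulIf x0); rewrite mul1r -exprSr prednK ?expf_card //.
by apply: ltn_trans (cardF_gt1).
Qed.

Lemma powsum (n : nat) : \sum_(x : F) x ^+ n =
  if (0 < n)%N && (#|F|.-1 %| n)%N then -1 else 0.
Proof.
case: n => [|n] /=.
  by rewrite (eq_bigr (fun _ => 1)) // sumr_const -mulr_natl mulr1 cardF0.
case: ifP => dv.
  rewrite (bigD1 0) //= expr0n /= add0r.
  rewrite (eq_bigr (fun _ => 1)); last first.
    move=> x x0; case/dvdnP: dv => m ->.
    by rewrite mulnC exprM xq1 // expr1n.
  by rewrite sumr_const cardC1 cardF1N.
have q1 : (0 < #|F|.-1)%N by have := cardF_gt1; lia.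
have [g g0 gn] : exists2 g : F, g != 0 & g ^+ n.+1 != 1.
  case: (pickP [pred g : F | (g != 0) && (g ^+ n.+1 != 1)]) => [g /andP[]|H].
    by exists g.
  exfalso.
  have Hg : forall g : F, g != 0 -> g ^+ (n.+1 %% #|F|.-1) = 1.
    move=> g g0; have := H g; rewrite /= g0 /= => /negbFE /eqP.
    rewrite {1}(divn_eq n.+1 #|F|.-1) exprD mulnC exprM xq1 // expr1n mul1r.
    by [].
  have m0 : (0 < n.+1 %% #|F|.-1)%N.
    by rewrite lt0n; apply/negP => /eqP/eqP; rewrite -/(dvdn _ _) dv.
  have Hall : all (n.+1 %% #|F|.-1).-unity_root (enum (predC1 (0 : F))).
    apply/allP => x; rewrite mem_enum unity_rootE => x0.
    by rewrite Hg.
  have := max_unity_roots m0 Hall (enum_uniq _).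
  rewrite -cardE cardC1 leqNgt ltn_pmod.
  by move=> F0. exact: q1.
set S := \sum_(x : F) x ^+ n.+1.
have : S = g ^+ n.+1 * S.
  rewrite {1}/S (reindex_inj (mulfI g0)) /= /S mulr_sumr.
  by apply: eq_bigr => x _; rewrite exprMn.
move/eqP; rewrite -subr_eq0 -{1}(mul1r S) -mulrBl mulf_eq0 subr_eq0 eq_sym.
by rewrite (negbTE gn) /= => /eqP.
Qed.
End Fin.
Section Dec.
Variable F : finFieldType.

Definition consf (d : nat) (p : F * {ffun 'I_d -> F}) : {ffun 'I_d.+1 -> F} :=
  [ffun i : 'I_d.+1 => if (i : nat) is j.+1 then
      (if insub j is Some j' then p.2 j' else p.1) else p.1].

Definition unconsf (d : nat) (c : {ffun 'I_d.+1 -> F}) : F * {ffun 'I_d -> F} :=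
  (c ord0, [ffun j : 'I_d => c (lift ord0 j)]).

Lemma consfK d : cancel (@consf d) (@unconsf d).
Proof.
case=> x c; rewrite /unconsf /consf /= ffunE /=; congr (_, _).
apply/ffunP => j; rewrite !ffunE /= valK //.
Qed.

Lemma unconsfK d : cancel (@unconsf d) (@consf d).
Proof.
move=> c; apply/ffunP => i; rewrite /consf /unconsf ffunE /=.
case: i => [[|j] Hj] /=.
  by congr (c _); apply: val_inj.
rewrite insubT //= ffunE; congr (c _); exact: val_inj.
Qed.

Lemma monic_ofS (d : nat) (x : F) (c : {ffun 'I_d -> F}) :
  monic_of (consf (x, c)) = monic_of c * 'X + x%:P :> {poly F}.
Proof.
apply/polyP => i; rewrite /monic_of !coefD coefMX !coefD !coefXn !coef_poly coefC.
case: i => [|i] /=.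
  by rewrite insubT //= ffunE /=.
rewrite addr0 eqSS ltnS.
have [Hi|Hi] := ltnP i d; last by [].
case: insubP => [j0 _ vj0|]; last by rewrite ltnS Hi.
rewrite ffunE /= vj0.
by case: insubP => [j _ vj|]; rewrite ?Hi.
Qed.

Lemma Aplus_sum (d : nat) (f : {poly F} -> At F) :
  \sum_(a <- Aplus F d.+1) f a =
  \sum_(b <- Aplus F d) \sum_(x : F) f (b * 'X + x%:P).
Proof.
rewrite /Aplus !big_map -!enumT !big_enum /=.
rewrite (reindex (@consf d)) /=; last first.
  by apply: onW_bij; exact: (Bijective (@consfK d) (@unconsfK d)).
rewrite exchange_big pair_big /=.
by apply: eq_big => [[x c]|[x c] _] //=; rewrite monic_ofS.
Qed.

End Dec.
Lemma aux1 (R : comRingType) (y u v : R) (m n p q c1 c2 : nat) :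
  y ^+ m * u ^+ p *+ c1 * (y ^+ n * v ^+ q *+ c2) =
  (c1 * c2)%:R * u ^+ p * v ^+ q * y ^+ (m + n).
Proof.
rewrite exprD -(mulr_natr (y ^+ m * u ^+ p) c1) -(mulr_natr (y^+n * v^+q) c2) natrM.
move: (y ^+ m) (y ^+ n) (u ^+ p) (v ^+ q) (c1%:R : R) (c2%:R : R) => A B C D a b.
ring.
Qed.
Lemma aux2 (R : comRingType) (a u t v s : R) (p q : nat) :
  a * (u * t) ^+ p * (v * s) ^+ q * (- 1) = - (a * t ^+ p * s ^+ q * (u ^+ p * v ^+ q)).
Proof.
rewrite !exprMn.
move: (u ^+ p) (t ^+ p) (v ^+ q) (s ^+ q) => A B C D.
ring.
Qed.

Section Main.
Variable F : finFieldType.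
Variables beta k : nat.

Lemma key (b : {poly F}) :
  \sum_(x : F) chi_t (b * 'X + x%:P) ^+ beta * ((b * 'X + x%:P)%:P) ^+ k =
  - \sum_(alpha < beta.+1) \sum_(l < k.+1 |
      ((alpha : nat, l : nat) != (beta, k)) &&
      ((#|F| - 1)%N %| (beta + k - (alpha + l)))%N)
    ('C(beta, alpha) * 'C(k, l))%:R * tAt F ^+ alpha * thetaAt F ^+ l *
       (chi_t b ^+ alpha * (b%:P) ^+ l).
Proof.
set U := chi_t b * tAt F; set V := b%:P * thetaAt F.
have E1 : forall x : F, chi_t (b * 'X + x%:P) = (x%:P)%:P + U.
  by move=> x; rewrite /chi_t rmorphD rmorphM /= map_polyX map_polyC /= addrC.
have E2 : forall x : F, (b * 'X + x%:P)%:P = (x%:P)%:P + V.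
  by move=> x; rewrite polyCD polyCM addrC.
under eq_bigr => x _ do rewrite E1 E2 !exprDn mulr_suml.
under eq_bigr => x _ do under eq_bigr => a _ do rewrite mulr_sumr.
rewrite exchange_big /= -sumrN; apply: eq_bigr => a _.
rewrite exchange_big /= -sumrN [RHS]big_mkcond /=; apply: eq_bigr => l _.
have -> : \sum_(i : F) ((i%:P)%:P ^+ (beta - a) * U ^+ a *+ 'C(beta, a) *
        ((i%:P)%:P ^+ (k - l) * V ^+ l *+ 'C(k, l))) =
    ('C(beta, a) * 'C(k, l))%:R * U ^+ a * V ^+ l *
      ((\sum_(i : F) i ^+ (beta - a + (k - l)))%:P)%:P.
  rewrite !rmorph_sum mulr_sumr; apply: eq_bigr => i _.
  by rewrite aux1 !rmorphXn.
rewrite powsum.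
have Ha : (a <= beta)%N by rewrite -ltnS.
have Hl : (l <= k)%N by rewrite -ltnS.
have -> : (beta + k - (a + l))%N = (beta - a + (k - l))%N by lia.
rewrite subn1 xpair_eqE.
have -> : (0 < beta - a + (k - l))%N = ~~ ((a == beta :> nat) && (l == k :> nat)).
  by case: (a =P beta :> nat) => Ea; case: (l =P k :> nat) => El /=; lia.
case: ifP => _; last by rewrite mulr0.
by rewrite /U /V polyCN polyC1 polyCN polyC1 aux2.
Qed.
End Main.

Lemma S0 (F : finFieldType) (beta k : nat) : S F 0 beta k = 1.
Proof.
rewrite /S /Aplus big_map big_enum /=.
rewrite (eq_bigr (fun _ => 1)); last first.
  move=> c _; have -> : monic_of c = 1.
    rewrite /monic_of GRing.expr0 (_ : \poly_(i < 0) _ = 0) ?addr0 //.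
    by apply/polyP => i; rewrite coef_poly coef0.
  by rewrite /chi_t rmorph1 !expr1n mulr1.
by rewrite sumr_const card_ffun card_ord expn0.
Qed.

Lemma SS (F : finFieldType) (beta k d : nat) :
  S F d.+1 beta k = - Xsum F beta k d.
Proof.
rewrite /S Aplus_sum.
under eq_bigr => b _ do rewrite key.
rewrite /Xsum sumrN; congr (- _).
rewrite exchange_big; apply: eq_bigr => a _.
rewrite exchange_big; apply: eq_bigr => l _.
by rewrite /z /S mulr_sumr.
Qed.

Lemma S00 (F : finFieldType) (d : nat) : S F d 0 0 = (d == 0%N)%:R.
Proof.
case: d => [|d]; first by rewrite S0.
rewrite /S Aplus_sum /=.
apply: big1 => b _.
have := powsum F 0; rewrite /= => H.
rewrite (eq_bigr (fun x : F => (((x ^+ 0)%:P)%:P : At F))); last first.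
  by move=> x _; rewrite !expr0 mulr1.
by rewrite -!rmorph_sum H !rmorph0.
Qed.


From Stdlib Require Import FunctionalExtensionality.

Theorem proposition2p0p1 (F : finFieldType) (beta k : nat) :
  z F 0 0 = ps_one F /\
  z F beta k = ps_sub (ps_one F) (ps_xinv (Xsum F beta k)).
Proof.
split; apply: functional_extensionality => d.
  by rewrite /z S00 /ps_one.
rewrite /z /ps_sub /ps_one /ps_xinv.
case: d => [|d]; first by rewrite S0 subr0.
by rewrite SS sub0r.
Qed.
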